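(* Let $\mathcal{H}$ be any directed hypergraph on $\{1,2,3\}$ and consider any network dynamical system on $\mathcal{H}$ with one-dimensional node states, smooth $F$ and smooth nodeunspecific coupling functions $G_e$ (possibly different for different hyperedges). Then the resulting vector field is not equal to the Guckenheimer--Holmes vector field $$\dot x_1 = x_1 + a x_1^3 + b x_1x_2^2 + c x_1x_3^2,\quad \dot x_2 = x_2 + a x_2^3 + b x_2x_3^2 + c x_1^2x_2,\quad \dot x_3 = x_3 + a x_3^3 + b x_1^2x_3 + c x_2^2x_3$$ for any real $a,b,c$ with $(b,c)\neq(0,0)$. In particular, it cannot be realized for parameters satisfying $a+b+c=-1$, $-\tfrac13<a<0$, $c<a<b<0$.
   Context: A directed hypergraph on $\mathcal{V}=\{1,\dots,N\}$ is a set $\mathcal{E}$ of hyperedges $e=(T(e),H(e))$ with nonempty tail $T(e)\subseteq\mathcal V$ and head $H(e)\subseteq\mathcal V$. A network dynamical system on it is $\dot x_k = F(x_k) + \sum_{e\in\mathcal{E}:\,k\in H(e)} G_e(x_k; x_{T(e)})$ on $\mathbb{R}^N$, with $F:\mathbb R\to\mathbb R$ smooth and each $G_e:\mathbb{R}\times\mathbb{R}^{|T(e)|}\to\mathbb{R}$ smooth, invariant under permutations of its last $|T(e)|$ arguments and depending nontrivially on them. The coupling is nodeunspecific if each $G_e(z;y)$ does not depend on its first argument $z$, i.e. $G_e(x_k;x_{T(e)})=G_e(x_{T(e)})$ (the receiving node may still belong to $T(e)$). *)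

(* Defs.v *)
From HB Require Import structures.
From mathcomp Require Import all_boot all_order all_fingroup all_algebra.
From mathcomp Require Import all_classical all_reals topology normedtype derive.
Set Implicit Arguments. Unset Strict Implicit. Unset Printing Implicit Defensive.
Import Order.TTheory GRing.Theory Num.Theory.
Import numFieldNormedType.Exports.
Local Open Scope ring_scope.

Definition iterD {R : realType} {V : normedModType R}
  (l : seq V) (f : V -> R) : V -> R :=
  foldr (fun v g => fun x => derive g x v) f l.

Definition smooth {R : realType} {V : normedModType R} (f : V -> R) : Prop :=
  forall (l : seq V) (x : V), differentiable (iterD l f) x.

(* Hyperedges on the node set {1,2,3} = 'I_3 : pairs (tail, head). *)
Definition hedge := ({set 'I_3} * {set 'I_3})%type.

Definition is_hypergraph (E : {set hedge}) : Prop :=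
  forall e, e \in E -> e.1 != finset.set0 /\ e.2 != finset.set0.

Definition tail_state {R : realType} (e : hedge) (x : 'I_3 -> R)
  : 'rV[R]_#|e.1| := \row_(j < #|e.1|) x (enum_val j).

(* Admissible nodeunspecific coupling function for hyperedge e:
   smooth, invariant under permutations of its |T(e)| arguments,
   and depending nontrivially on its arguments. *)
Definition admissible_coupling {R : realType} (e : hedge)
  (g : 'rV[R]_#|e.1| -> R) : Prop :=
  [/\ smooth g,
      (forall (s : 'S_#|e.1|) (y : 'rV[R]_#|e.1|), g (col_perm s y) = g y) &
      (forall j : 'I_#|e.1|, exists y y' : 'rV[R]_#|e.1|,
          (forall i, i != j -> y ord0 i = y' ord0 i) /\ g y != g y')].

Definition network_vf {R : realType} (E : {set hedge}) (F : R -> R)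
  (G : forall e : hedge, 'rV[R]_#|e.1| -> R) (x : 'I_3 -> R) (k : 'I_3) : R :=
  F (x k) + \sum_(e in E | k \in e.2) G e (tail_state e x).

(* The Guckenheimer--Holmes vector field (node 1,2,3 = ordinals 0,1,2). *)
Definition GH_vf {R : realType} (a b c : R) (x : 'I_3 -> R) (k : 'I_3) : R :=
  let x1 := x (inord 0) in let x2 := x (inord 1) in let x3 := x (inord 2) in
  match val k with
  | 0 => x1 + a * x1 ^+ 3 + b * x1 * x2 ^+ 2 + c * x1 * x3 ^+ 2
  | 1 => x2 + a * x2 ^+ 3 + b * x2 * x3 ^+ 2 + c * x1 ^+ 2 * x2
  | _ => x3 + a * x3 ^+ 3 + b * x1 ^+ 2 * x3 + c * x2 ^+ 2 * x3
  end.

(* Main.v *)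
Require Import Defs.
From HB Require Import structures.
From mathcomp Require Import all_boot all_order all_fingroup all_algebra.
From mathcomp Require Import all_classical all_reals topology normedtype derive.
From mathcomp Require Import lra.
Import Order.TTheory GRing.Theory Num.Theory.
Import numFieldNormedType.Exports.
Local Open Scope ring_scope.

Lemma tail_eq (R : realType) (e : hedge) (x x' : 'I_3 -> R) :
  (forall l, l \in e.1 -> x l = x' l) -> tail_state e x = tail_state e x'.
Proof. by move=> H; apply/rowP => j; rewrite !mxE; apply: H; exact: enum_valP. Qed.

Lemma tail_perm (R : realType) (e : hedge) (X : 'I_3 -> R) (i j : 'I_3) :
  i \in e.1 -> j \in e.1 ->
  exists s, tail_state e (fun l => X (tperm i j l)) = col_perm s (tail_state e X).
Proof.
move=> Hi Hj.
have Hin : forall l, l \in e.1 -> tperm i j l \in e.1.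
  by move=> l Hl; case: tpermP.
pose f (k : 'I_#|e.1|) := enum_rank_in Hi (tperm i j (enum_val k)).
have fK : forall k, enum_val (f k) = tperm i j (enum_val k).
  by move=> k; rewrite /f enum_rankK_in // Hin // enum_valP.
have finj : injective f.
  move=> k1 k2 /(congr1 enum_val); rewrite !fK => /perm_inj; exact: enum_val_inj.
exists (perm finj); apply/rowP => k; rewrite !mxE permE.
rewrite ?permE fK.
by rewrite permE.
Qed.

Definition X (R : realType) (i j : 'I_3) (p q : R) : 'I_3 -> R :=
  fun l => if l == i then p else if l == j then q else 0.
Arguments X {R}.

Lemma edge_id (R : realType) (e : hedge) (g : 'rV[R]_#|e.1| -> R) (i j : 'I_3)
  (hij : i != j) (sym : forall (s : 'S_#|e.1|) y, g (col_perm s y) = g y) (p q s : R) :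
  let t := fun p q => g (tail_state e (X i j p q)) in
  t p q - t q p + t q s - t s q - t p s + t s p = 0.
Proof.
move=> t.
have Ai : i \notin e.1 -> forall p q, t p q = t 0 q.
  move=> Hi p' q'; rewrite /t (@tail_eq _ e (X i j p' q') (X i j 0 q')) // => l Hl.
  by rewrite /X; case: eqP => [El|//]; rewrite -El Hl in Hi.
have Aj : j \notin e.1 -> forall p q, t p q = t p 0.
  move=> Hj p' q'; rewrite /t (@tail_eq _ e (X i j p' q') (X i j p' 0)) // => l Hl.
  by rewrite /X; case: eqP => // _; case: eqP => [El|//]; rewrite -El Hl in Hj.
have Aij : i \in e.1 -> j \in e.1 -> forall p q, t p q = t q p.
  move=> Hi Hj p' q'; rewrite /t.
  rewrite (@tail_eq _ e (X i j q' p') (fun l => X i j p' q' (tperm i j l))).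
    by have [sg ->] := @tail_perm _ e (X i j p' q') i j Hi Hj; rewrite sym.
  move=> l _; rewrite /X; case: tpermP => [->|->|/eqP/negbTE-> /eqP/negbTE->] //.
    by rewrite !eqxx eq_sym (negbTE hij).
  by rewrite !eqxx eq_sym (negbTE hij).
clearbody t.
case Hi: (i \in e.1); case Hj: (j \in e.1).
- have := Aij Hi Hj p q; have := Aij Hi Hj q s; have := Aij Hi Hj p s; lra.
- move/negbT: Hj => Hj.
  have := Aj Hj p q; have := Aj Hj q p; have := Aj Hj q s; have := Aj Hj s q;
  have := Aj Hj p s; have := Aj Hj s p; lra.
- move/negbT: Hi => Hi.
  have := Ai Hi p q; have := Ai Hi q p; have := Ai Hi q s; have := Ai Hi s q;
  have := Ai Hi p s; have := Ai Hi s p; lra.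
- move/negbT: Hi => Hi; move/negbT: Hj => Hj.
  have := Ai Hi p q; have := Ai Hi q p; have := Ai Hi q s; have := Ai Hi s q;
  have := Ai Hi p s; have := Ai Hi s p; have := Aj Hj 0 q; have := Aj Hj 0 p;
  have := Aj Hj 0 s; lra.
Qed.

Lemma key (R : realType) (E : {set hedge}) (F : R -> R)
  (G : forall e : hedge, 'rV[R]_#|e.1| -> R) (i j : 'I_3) (hij : i != j) :
  (forall e, e \in E -> admissible_coupling (G e)) -> forall p q s : R,
  let N := fun p q => network_vf E F G (X i j p q) i in
  N p q - N q p + N q s - N s q - N p s + N s p = 0.
Proof.
move=> adm p q s N.
pose t e p q := G e (tail_state e (X i j p q)).
have H : \sum_(e in E | i \in e.2)
   (t e p q - t e q p + t e q s - t e s q - t e p s + t e s p) = 0.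
  apply: big1 => e /andP[He _]; have [_ sym _] := adm e He.
  exact: edge_id.
rewrite !(big_split, sumrB) /= in H.
rewrite /N /network_vf /X eqxx.
rewrite /t /X ?sumrN in H.
lra.
Qed.

Lemma GH0 (R : realType) (a b c : R) (x : 'I_3 -> R) :
  GH_vf a b c x (inord 0) = x (inord 0) + a * x (inord 0) ^+ 3
    + b * x (inord 0) * x (inord 1) ^+ 2 + c * x (inord 0) * x (inord 2) ^+ 2.
Proof. by rewrite /GH_vf; have -> : val (inord 0 : 'I_3) = 0%N by exact: inordK. Qed.

Lemma ord_neq (m n : nat) : (m < 3)%N -> (n < 3)%N -> m != n ->
  (inord m : 'I_3) != inord n.
Proof. by move=> hm hn hmn; rewrite -(inj_eq val_inj) /= !inordK. Qed.

Theorem mainTheorem3 (R : realType) (E : {set hedge}) (F : R -> R)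
  (G : forall e : hedge, 'rV[R]_#|e.1| -> R) :
  is_hypergraph E ->
  smooth F ->
  (forall e, e \in E -> admissible_coupling (G e)) ->
  (forall a b c : R, (b, c) != (0, 0) ->
     ~ (forall (x : 'I_3 -> R) (k : 'I_3), network_vf E F G x k = GH_vf a b c x k)) /\
  (forall a b c : R, a + b + c = -1 -> - (1 / 3) < a -> a < 0 -> c < a -> a < b -> b < 0 ->
     ~ (forall (x : 'I_3 -> R) (k : 'I_3), network_vf E F G x k = GH_vf a b c x k)).
Proof.
move=> _ _ adm.
have P1 : forall a b c : R, (b, c) != (0, 0) ->
     ~ (forall (x : 'I_3 -> R) (k : 'I_3), network_vf E F G x k = GH_vf a b c x k).
  move=> a b c hbc H.
  have n01 : (inord 0 : 'I_3) != inord 1 by apply: ord_neq.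
  have n02 : (inord 0 : 'I_3) != inord 2 by apply: ord_neq.
  have n12 : (inord 1 : 'I_3) != inord 2 by apply: ord_neq.
  have n10 : (inord 1 : 'I_3) != inord 0 by apply: ord_neq.
  have n20 : (inord 2 : 'I_3) != inord 0 by apply: ord_neq.
  have n21 : (inord 2 : 'I_3) != inord 1 by apply: ord_neq.
  have hb : b = 0.
    have := @key _ E F G _ _ n01 adm 1 2 0.
    rewrite /= !H !GH0 /X ?eqxx ?(negbTE n01, negbTE n02, negbTE n12,
      negbTE n10, negbTE n20, negbTE n21) => K.
    lra.
  have hc : c = 0.
    have := @key _ E F G _ _ n02 adm 1 2 0.
    rewrite /= !H !GH0 /X ?eqxx ?(negbTE n01, negbTE n02, negbTE n12,
      negbTE n10, negbTE n20, negbTE n21) => K.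
    lra.
  by move: hbc; rewrite hb hc eqxx.
split=> // a b c _ _ _ _ _ hb; apply: P1.
by apply/negP => /eqP [hb0 _]; move: hb; rewrite hb0 ltxx.
Qed.
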